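(* Let $k$ be an algebraically closed field of arbitrary characteristic. Fix integers $d_2\ge d_1>0$, a smooth quadric $Q\subset\mathbb{P}^3$, lines $L\in|\mathcal{O}_Q(1,0)|$ and $L'\in|\mathcal{O}_Q(0,1)|$, and let $\{q\}=L\cap L'$. Fix $o\in L\setminus\{q\}$ and $o'\in L'\setminus\{q\}$. Let $Z\subset L$ be the effective divisor $d_2\cdot o$ of $L$ and $Z'\subset L'$ the effective divisor $d_1\cdot o'$ of $L'$, regarded as zero-dimensional subschemes of $Q$ of degrees $d_2$ and $d_1$ respectively. Then there is a smooth divisor $Y\in|\mathcal{O}_Q(d_1,d_2)|$ such that $Y\cap L=Z$ and $Y\cap L'=Z'$ (in particular, set-theoretically $Y$ meets $L$ only at $o$ and $L'$ only at $o'$).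
   Context: $\mathcal{O}_Q(a,b)$ denotes the line bundle of bidegree $(a,b)$ on $Q\cong\mathbb{P}^1\times\mathbb{P}^1$; a curve in $|\mathcal{O}_Q(d_1,d_2)|$ meets a line of $|\mathcal{O}_Q(1,0)|$ in degree $d_2$ and a line of $|\mathcal{O}_Q(0,1)|$ in degree $d_1$. *)

(* Defs.v *)
From HB Require Import structures.
From mathcomp Require Import all_boot all_order all_algebra.
From mathcomp Require Export mpoly.
Set Implicit Arguments. Unset Strict Implicit. Unset Printing Implicit Defensive.
Import GRing.Theory.
Local Open Scope ring_scope.

(* Q = P^1 x P^1 with bihomogeneous coordinates (x0:x1 ; y0:y1),
   encoded as the four variables 'X_0 = x0, 'X_1 = x1, 'X_2 = y0, 'X_3 = y1
   of {mpoly K[4]}. *)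
Definition vx0 : 'I_4 := @inord 3 0.
Definition vx1 : 'I_4 := @inord 3 1.
Definition vy0 : 'I_4 := @inord 3 2.
Definition vy1 : 'I_4 := @inord 3 3.

(* F is bihomogeneous of bidegree (d1,d2): every monomial has degree d1 in
   (x0,x1) and degree d2 in (y0,y1).  Nonzero such F define the curves of
   |O_Q(d1,d2)|. *)
Definition bihomog (K : fieldType) (d1 d2 : nat) (F : {mpoly K[4]}) : bool :=
  all (fun m : 'X_{1..4} => (m vx0 + m vx1 == d1)%N && (m vy0 + m vy1 == d2)%N)
      (msupp F).

(* A point of P^1 is a nonzero vector of K^2 (up to scaling). *)
Definition pt4 (K : fieldType) (u v : K * K) : 'I_4 -> K :=
  fun i => nth 0 [:: u.1; u.2; v.1; v.2] i.

(* The curve V(F) ⊂ P^1 x P^1 is smooth: there is no point where F and all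
   four partial derivatives vanish (this is the Jacobian criterion for the
   hypersurface V(F), chart-independent thanks to the Euler relations). *)
Definition smooth_bihom (K : fieldType) (F : {mpoly K[4]}) : Prop :=
  forall u v : K * K, u != (0, 0) -> v != (0, 0) ->
    ~ (F.@[pt4 u v] = 0 /\ forall i : 'I_4, (F^`M(i)).@[pt4 u v] = 0).

(* Restriction of F to the line {(x0:x1) = a} x P^1 (a line of |O_Q(1,0)|):
   the binary form F(a0,a1,y0,y1). *)
Definition restr_x (K : fieldType) (a : K * K) (F : {mpoly K[4]}) : {mpoly K[4]} :=
  F \mPo [tuple a.1%:MP; a.2%:MP; 'X_vy0; 'X_vy1].

(* Restriction of F to the line P^1 x {(y0:y1) = b} (a line of |O_Q(0,1)|). *)
Definition restr_y (K : fieldType) (b : K * K) (F : {mpoly K[4]}) : {mpoly K[4]} :=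
  F \mPo [tuple 'X_vx0; 'X_vx1; b.1%:MP; b.2%:MP].

(* Main.v *)
Require Import Defs.
From HB Require Import structures.
From mathcomp Require Import all_boot all_order all_algebra.
From mathcomp Require Import mpoly.
From mathcomp Require Import ring.
Import GRing.Theory.
Local Open Scope ring_scope.

Fixpoint hv {K : fieldType} (r : seq K) (a b : K) : K :=
  if r is x :: r' then (b - x * a) * hv r' a b else 1.
Fixpoint hT {K : fieldType} (r : seq K) (a b : K) : K :=
  if r is x :: r' then hv r' a b + (b - x * a) * hT r' a b else 0.
Fixpoint hS {K : fieldType} (r : seq K) (a b : K) : K :=
  if r is x :: r' then - x * hv r' a b + (b - x * a) * hS r' a b else 0.

Definition Pp {K : fieldType} (r : seq K) : {poly K} := \prod_(x <- r) ('X - x%:P).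
Fixpoint PTp {K : fieldType} (r : seq K) : {poly K} :=
  if r is x :: r' then Pp r' + ('X - x%:P) * PTp r' else 0.

Lemma hv_norm {K : fieldType} (r : seq K) s tau :
  hv r s (s * tau) = s ^+ size r * (Pp r).[tau].
Proof.
elim: r => [|x r IH] /=; first by rewrite /Pp big_nil hornerC expr0 mulr1.
rewrite IH /Pp big_cons hornerM hornerXsubC exprS; ring.
Qed.

Lemma hT_norm {K : fieldType} (r : seq K) s tau :
  s * hT r s (s * tau) = s ^+ size r * (PTp r).[tau].
Proof.
elim: r => [|x r IH] /=; first by rewrite horner0 !mulr0.
rewrite hornerD hornerM hornerXsubC hv_norm mulrDr.
have -> : s * ((s * tau - x * s) * hT r s (s * tau)) = (tau - x) * (s * hT r s (s * tau)) * s by ring.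
rewrite IH exprS; ring.
Qed.

Lemma hv_s0 {K : fieldType} (r : seq K) t : hv r 0 t = t ^+ size r.
Proof. by elim: r => [|x r IH] //=; rewrite IH mulr0 subr0 exprS. Qed.

Lemma hv_neq0 {K : fieldType} (r : seq K) s t :
  (forall x, x \in r -> t - x * s != 0) -> hv r s t != 0.
Proof.
elim: r => [|x r IH] H /=; first exact: oner_neq0.
rewrite mulf_neq0 //; first by apply: H; rewrite mem_head.
by apply: IH => y yr; apply: H; rewrite inE yr orbT.
Qed.

Lemma hT_simple {K : fieldType} (r : seq K) s t :
  uniq r -> (s, t) != (0, 0) -> hv r s t = 0 -> hT r s t != 0.
Proof.
move=> + st0; elim: r => [|x r IH] /=; first by move=> _ /eqP; rewrite oner_eq0.
case/andP=> xr ur; have [e0|ne0] := eqVneq (t - x * s) 0.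
  move=> _; rewrite e0 mul0r addr0; apply: hv_neq0 => y yr.
  have ts : t = x * s by apply/eqP; rewrite -subr_eq0 e0.
  have s0 : s != 0.
    apply: contra st0 => /eqP s0; by rewrite ts s0 mulr0.
  rewrite ts -mulrBl mulf_neq0 // subr_eq0; apply: contraNneq xr => ->; exact: yr.
move=> /eqP; rewrite mulf_eq0 (negbTE ne0) /= => /eqP h0.
by rewrite h0 add0r mulf_neq0 // IH.
Qed.

Lemma exists_notin {K : closedFieldType} (s : seq K) : exists x, x \notin s.
Proof.
have : size (\prod_(z <- s) ('X - z%:P) - 1 : {poly K}) != 1%N.
  case: s => [|z s]; first by rewrite big_nil subrr size_poly0.
  rewrite size_addl ?size_prod_XsubC ?size_opp ?size_poly1 //.
case/closed_rootP => x; rewrite /root hornerD hornerN hornerC subr_eq0.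
rewrite horner_prod => /eqP H; exists x; apply/negP => xs.
move: H; rewrite (big_rem x xs) /= hornerXsubC subrr mul0r => /eqP.
by rewrite eq_sym oner_eq0.
Qed.

Lemma exists_uniq {K : closedFieldType} (k : nat) :
  exists r : seq K, uniq (0 :: r) /\ size r = k.
Proof.
elim: k => [|k [r [ur sr]]]; first by exists [::].
have [x xr] := exists_notin (0 :: r).
exists (x :: r); split => //=.
  move: ur xr; rewrite /= !inE negb_or => /andP[nr ->] /andP[x0 ->].
  by rewrite andbT negb_or eq_sym x0 /= nr.
by rewrite sr.
Qed.

Lemma choose_kappa {K : closedFieldType} (p1 p2 q1 q2 : {poly K}) :
  q1 != 0 -> q2 != 0 -> exists k : K, k != 0 /\
    forall x y, q1.[x] = 0 -> q2.[y] = 0 -> k * (p1.[x] * p2.[y]) != 1.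
Proof.
move=> nq1 nq2.
have [rs1 D1] := closed_field_poly_normal q1.
have [rs2 D2] := closed_field_poly_normal q2.
have [k kb] := exists_notin (0 :: [seq (p1.[x] * p2.[y])^-1 | x <- rs1, y <- rs2]).
move: kb; rewrite inE negb_or => /andP[k0 kb].
exists k; split => // x y qx qy; apply/negP => /eqP H.
have X0 : p1.[x] * p2.[y] != 0.
  by apply/eqP => X0; move: H; rewrite X0 mulr0 => /eqP; rewrite eq_sym oner_eq0.
have kE : k = (p1.[x] * p2.[y])^-1.
  by apply: (mulIf X0); rewrite H mulVf.
have xr : x \in rs1.
  have : root q1 x by apply/eqP.
  by rewrite D1 rootZ ?lead_coef_eq0 // root_prod_XsubC.
have yr : y \in rs2.
  have : root q2 y by apply/eqP.
  by rewrite D2 rootZ ?lead_coef_eq0 // root_prod_XsubC.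
move/negP: kb; apply; rewrite kE.
exact: (allpairs_f (fun x y => (p1.[x] * p2.[y])^-1) xr yr).
Qed.

Definition lf {K : fieldType} (p q : K) (i j : 'I_4) : {mpoly K[4]} :=
  p *: 'X_i - q *: 'X_j.
Definition Hp {K : fieldType} (r : seq K) (A B : {mpoly K[4]}) : {mpoly K[4]} :=
  \prod_(x <- r) (B - x *: A).

Lemma ev_Hp {K : fieldType} (r : seq K) A B v :
  (Hp r A B).@[v] = hv r A.@[v] B.@[v].
Proof.
elim: r => [|x r IH]; first by rewrite /Hp big_nil meval1.
by rewrite /Hp big_cons mevalM mevalB mevalZ -/(Hp r A B) IH.
Qed.

Lemma der_Hp {K : fieldType} (r : seq K) A B v j :
  ((Hp r A B)^`M(j)).@[v] =
    (A^`M(j)).@[v] * hS r A.@[v] B.@[v] + (B^`M(j)).@[v] * hT r A.@[v] B.@[v].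
Proof.
elim: r => [|x r IH]; first by rewrite /Hp big_nil mderivC meval0 /= !mulr0 addr0.
rewrite /Hp big_cons mderivM -/(Hp r A B) mevalD !mevalM IH ev_Hp mderivB mderivZ.
rewrite !mevalB !mevalZ /=; ring.
Qed.

Lemma ev_exp {K : fieldType} (A : {mpoly K[4]}) v k :
  (A ^+ k).@[v] = A.@[v] ^+ k.
Proof.
elim: k => [|k IH]; first by rewrite !expr0 meval1.
by rewrite !exprS mevalM IH.
Qed.

Lemma der_exp {K : fieldType} (A : {mpoly K[4]}) v j k :
  ((A ^+ k.+1)^`M(j)).@[v] = k.+1%:R * A.@[v] ^+ k * (A^`M(j)).@[v].
Proof.
elim: k => [|k IH]; first by rewrite expr1 expr0 mul1r mul1r.
rewrite exprS mderivM mevalD !mevalM IH !ev_exp !exprS; ring.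
Qed.

Lemma der_X {K : fieldType} (i j : 'I_4) v :
  (('X_i : {mpoly K[4]})^`M(j)).@[v] = (i == j)%:R.
Proof.
rewrite mderivX mevalZ mnm1E; case: eqP => [->|_]; last by rewrite mul0r.
have -> : (U_(j) - U_(j) = 0)%MM by apply/mnmP => l; rewrite mnmBE subnn mnmE.
by rewrite mpolyX0 meval1 mulr1.
Qed.

Lemma der_lf {K : fieldType} (p q : K) i j k v :
  ((lf p q i j)^`M(k)).@[v] = p * (i == k)%:R - q * (j == k)%:R.
Proof. by rewrite /lf mderivB !mderivZ mevalB !mevalZ !der_X. Qed.

Lemma ev_lf {K : fieldType} (p q : K) i j v :
  (lf p q i j).@[v] = p * v i - q * v j.
Proof. by rewrite /lf mevalB !mevalZ !mevalXU. Qed.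

Lemma bh0 {K : fieldType} i j : bihomog i j (0 : {mpoly K[4]}).
Proof. by rewrite /bihomog msupp0. Qed.

Lemma bh1 {K : fieldType} : bihomog 0%N 0%N (1 : {mpoly K[4]}).
Proof. by rewrite /bihomog msupp1 /= !mnmE. Qed.

Lemma bhD {K : fieldType} i j (p q : {mpoly K[4]}) :
  bihomog i j p -> bihomog i j q -> bihomog i j (p + q).
Proof.
move=> /allP hp /allP hq; apply/allP => m /msuppD_le; rewrite mem_cat.
by case/orP => [/hp|/hq].
Qed.

Lemma bhN {K : fieldType} i j (p : {mpoly K[4]}) :
  bihomog i j p -> bihomog i j (- p).
Proof.
by move=> /allP hp; apply/allP => m; rewrite (perm_mem (msuppN p)) => /hp.
Qed.

Lemma bhB {K : fieldType} i j (p q : {mpoly K[4]}) :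
  bihomog i j p -> bihomog i j q -> bihomog i j (p - q).
Proof. by move=> hp hq; apply: bhD => //; apply: bhN. Qed.

Lemma bhZ {K : fieldType} i j c (p : {mpoly K[4]}) :
  bihomog i j p -> bihomog i j (c *: p).
Proof. by move=> /allP hp; apply/allP => m /msuppZ_le /hp. Qed.

Lemma bhM {K : fieldType} i j k l (p q : {mpoly K[4]}) :
  bihomog i j p -> bihomog k l q -> bihomog (i + k)%N (j + l)%N (p * q).
Proof.
move=> /allP hp /allP hq; apply/allP => m /msuppM_le /allpairsP [[m1 m2] /= [h1 h2 ->]].
move: (hp _ h1) (hq _ h2) => /andP[/eqP e1 /eqP e2] /andP[/eqP e3 /eqP e4].
rewrite !mnmDE; apply/andP; split; apply/eqP.
  by rewrite addnACA e1 e3.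
by rewrite addnACA e2 e4.
Qed.

Lemma bhX {K : fieldType} i j k (p : {mpoly K[4]}) :
  bihomog i j p -> bihomog (i * k)%N (j * k)%N (p ^+ k).
Proof.
move=> hp; elim: k => [|k IH]; first by rewrite !muln0 expr0; exact: bh1.
by rewrite exprS !mulnS; apply: bhM.
Qed.

Lemma bhXv {K : fieldType} (i : 'I_4) :
  bihomog ((i == vx0) + (i == vx1)) ((i == vy0) + (i == vy1)) ('X_i : {mpoly K[4]}).
Proof. by rewrite /bihomog msuppX /= !mnm1E !eqxx. Qed.

Lemma bh_lfx {K : fieldType} (p q : K) : bihomog 1%N 0%N (lf p q vx0 vx1).
Proof.
apply: bhB; apply: bhZ.
  by have := @bhXv K vx0; rewrite /vx0 /vx1 /vy0 /vy1 -!val_eqE /= !inordK.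
by have := @bhXv K vx1; rewrite /vx0 /vx1 /vy0 /vy1 -!val_eqE /= !inordK.
Qed.

Lemma bh_lfy {K : fieldType} (p q : K) : bihomog 0%N 1%N (lf p q vy0 vy1).
Proof.
apply: bhB; apply: bhZ.
  by have := @bhXv K vy0; rewrite /vx0 /vx1 /vy0 /vy1 -!val_eqE /= !inordK.
by have := @bhXv K vy1; rewrite /vx0 /vx1 /vy0 /vy1 -!val_eqE /= !inordK.
Qed.

Lemma bh_Hp {K : fieldType} i j (r : seq K) A B :
  bihomog i j A -> bihomog i j B -> bihomog (i * size r)%N (j * size r)%N (Hp r A B).
Proof.
move=> hA hB; elim: r => [|x r IH]; first by rewrite /Hp big_nil !muln0; exact: bh1.
rewrite /Hp big_cons -/(Hp r A B) /= !mulnS; apply: bhM => //.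
by apply: bhB => //; apply: bhZ.
Qed.

Lemma nth4 {T : Type} (x0 A B C D : T) :
  [/\ nth x0 [:: A; B; C; D] vx0 = A, nth x0 [:: A; B; C; D] vx1 = B,
      nth x0 [:: A; B; C; D] vy0 = C & nth x0 [:: A; B; C; D] vy1 = D].
Proof. by rewrite /vx0 /vx1 /vy0 /vy1 !inordK. Qed.

Lemma comp_lf {K : fieldType} (p q : K) i j (lq : 4.-tuple {mpoly K[4]}) :
  (lf p q i j) \mPo lq = p *: lq`_i - q *: lq`_j.
Proof. by rewrite /lf comp_mpolyB !comp_mpolyZ !comp_mpolyXU. Qed.

Lemma comp_Hp {K : fieldType} (r : seq K) A B (lq : 4.-tuple {mpoly K[4]}) :
  (Hp r A B) \mPo lq = Hp r (A \mPo lq) (B \mPo lq).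
Proof.
elim: r => [|x r IH]; first by rewrite /Hp !big_nil comp_mpoly1.
rewrite /Hp !big_cons -/(Hp r A B) -/(Hp r (A \mPo lq) (B \mPo lq)) -IH.
by rewrite rmorphM -comp_mpolyZ -comp_mpolyB.
Qed.

Lemma Hp0 {K : fieldType} (r : seq K) A : Hp (0 :: r) A 0 = 0.
Proof. by rewrite /Hp big_cons scale0r subr0 mul0r. Qed.

Lemma CC {K : fieldType} (p q : K) : p *: (q%:MP : {mpoly K[4]}) = (p * q)%:MP.
Proof. by rewrite -mul_mpolyC -mpolyCM. Qed.

Definition Fp {K : fieldType} (m n : nat) (k : K) (a b c e : K * K) (r1 r2 : seq K) :=
  (lf e.2 e.1 vx0 vx1) ^+ m * (lf c.2 c.1 vy0 vy1) ^+ n -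
  k *: (Hp r1 (lf e.2 e.1 vx0 vx1) (lf a.2 a.1 vx0 vx1) *
        Hp r2 (lf c.2 c.1 vy0 vy1) (lf b.2 b.1 vy0 vy1)).

Lemma restr_x_Fp {K : fieldType} m n k (a b c e : K * K) r1 r2 :
  restr_x a (Fp m n k a b c e (0 :: r1) r2) =
  (e.2 * a.1 - e.1 * a.2) ^+ m *: (c.2 *: 'X_vy0 - c.1 *: 'X_vy1) ^+ n.
Proof.
rewrite /restr_x /Fp rmorphB rmorphM !rmorphXn /= comp_mpolyZ rmorphM /= !comp_Hp !comp_lf /=.
have [-> -> -> ->] := nth4 0 (a.1%:MP : {mpoly K[4]}) (a.2%:MP) 'X_vy0 'X_vy1.
rewrite !CC [a.2 * a.1]mulrC subrr Hp0 mul0r scaler0 subr0.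
by rewrite -rmorphB -rmorphXn mul_mpolyC.
Qed.

Lemma restr_y_Fp {K : fieldType} m n k (a b c e : K * K) r1 r2 :
  restr_y b (Fp m n k a b c e r1 (0 :: r2)) =
  (c.2 * b.1 - c.1 * b.2) ^+ n *: (e.2 *: 'X_vx0 - e.1 *: 'X_vx1) ^+ m.
Proof.
rewrite /restr_y /Fp rmorphB rmorphM !rmorphXn /= comp_mpolyZ rmorphM /= !comp_Hp !comp_lf /=.
have [-> -> -> ->] := nth4 0 ('X_vx0 : {mpoly K[4]}) 'X_vx1 (b.1%:MP) (b.2%:MP).
rewrite !CC [b.2 * b.1]mulrC subrr Hp0 mulr0 scaler0 subr0.
by rewrite -rmorphB -rmorphXn mulrC mul_mpolyC.
Qed.

Lemma core {K : fieldType} m n k (R1 R2 : seq K) s t y z :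
  uniq R1 -> uniq R2 -> size R1 = m.+1 -> size R2 = n.+1 -> k != 0 ->
  (forall x w, (PTp R1).[x] = 0 -> (PTp R2).[w] = 0 ->
     k * ((Pp R1).[x] * (Pp R2).[w]) != 1) ->
  (s, t) != (0, 0) -> (y, z) != (0, 0) ->
  s ^+ m.+1 * y ^+ n.+1 = k * (hv R1 s t * hv R2 y z) ->
  hT R1 s t * hv R2 y z = 0 -> hv R1 s t * hT R2 y z = 0 -> False.
Proof.
move=> u1 u2 z1 z2 k0 kb st0 yz0 F0 KT KW.
have [s0|s0] := eqVneq s 0.
  subst s.
  have t0 : t != 0 by apply: contraNneq st0 => t0; rewrite t0.
  have h1 : hv R1 0 t != 0 by rewrite hv_s0 expf_neq0.
  have h2 : hv R2 y z = 0.
    move: F0; rewrite expr0n /= mul0r => /esym /eqP.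
    by rewrite !mulf_eq0 (negbTE k0) (negbTE h1) /= => /eqP.
  by move/eqP: KW; rewrite mulf_eq0 (negbTE h1) /= (negbTE (@hT_simple _ _ _ _ u2 yz0 h2)).
have [y0|y0] := eqVneq y 0.
  subst y.
  have z0 : z != 0 by apply: contraNneq yz0 => z0; rewrite z0.
  have h2 : hv R2 0 z != 0 by rewrite hv_s0 expf_neq0.
  have h1 : hv R1 s t = 0.
    move: F0; rewrite expr0n /= mulr0 => /esym /eqP.
    by rewrite !mulf_eq0 (negbTE k0) (negbTE h2) /= orbF => /eqP.
  by move/eqP: KT; rewrite mulf_eq0 (negbTE h2) orbF (negbTE (@hT_simple _ _ _ _ u1 st0 h1)).
have tE : t = s * (t / s) by rewrite mulrC divfK.
have zE : z = y * (z / y) by rewrite mulrC divfK.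
have L0 : s ^+ m.+1 * y ^+ n.+1 != 0 by rewrite mulf_neq0 // expf_neq0.
have h1 : hv R1 s t != 0.
  by apply: contraNneq L0 => h; rewrite F0 h mul0r mulr0.
have h2 : hv R2 y z != 0.
  by apply: contraNneq L0 => h; rewrite F0 h mulr0 mulr0.
have hT1 : hT R1 s t = 0.
  by move/eqP: KT; rewrite mulf_eq0 (negbTE h2) orbF => /eqP.
have hT2 : hT R2 y z = 0.
  by move/eqP: KW; rewrite mulf_eq0 (negbTE h1) /= => /eqP.
have P1 : (PTp R1).[t / s] = 0.
  have := hT_norm R1 s (t / s); rewrite -tE hT1 mulr0 => /esym /eqP.
  by rewrite mulf_eq0 expf_eq0 (negbTE s0) andbF /= => /eqP.
have P2 : (PTp R2).[z / y] = 0.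
  have := hT_norm R2 y (z / y); rewrite -zE hT2 mulr0 => /esym /eqP.
  by rewrite mulf_eq0 expf_eq0 (negbTE y0) andbF /= => /eqP.
move/negP: (kb _ _ P1 P2); apply; apply/eqP.
have E1 : hv R1 s t = s ^+ m.+1 * (Pp R1).[t / s] by rewrite {1}tE hv_norm z1.
have E2 : hv R2 y z = y ^+ n.+1 * (Pp R2).[z / y] by rewrite {1}zE hv_norm z2.
rewrite E1 E2 in F0.
move: F0 L0; set S := s ^+ m.+1; set Y := y ^+ n.+1; set A := (Pp R1).[t / s]; set B := (Pp R2).[z / y].
move=> F0 L0; apply: (mulfI L0); rewrite mulr1 [RHS]F0; ring.
Qed.
Lemma ne_vx0_vx1 : (vx0 == vx1) = false. Proof. by rewrite -val_eqE /= !inordK. Qed.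
Lemma ne_vx0_vy0 : (vx0 == vy0) = false. Proof. by rewrite -val_eqE /= !inordK. Qed.
Lemma ne_vx0_vy1 : (vx0 == vy1) = false. Proof. by rewrite -val_eqE /= !inordK. Qed.
Lemma ne_vx1_vx0 : (vx1 == vx0) = false. Proof. by rewrite -val_eqE /= !inordK. Qed.
Lemma ne_vx1_vy0 : (vx1 == vy0) = false. Proof. by rewrite -val_eqE /= !inordK. Qed.
Lemma ne_vx1_vy1 : (vx1 == vy1) = false. Proof. by rewrite -val_eqE /= !inordK. Qed.
Lemma ne_vy0_vx0 : (vy0 == vx0) = false. Proof. by rewrite -val_eqE /= !inordK. Qed.
Lemma ne_vy0_vx1 : (vy0 == vx1) = false. Proof. by rewrite -val_eqE /= !inordK. Qed.
Lemma ne_vy0_vy1 : (vy0 == vy1) = false. Proof. by rewrite -val_eqE /= !inordK. Qed.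
Lemma ne_vy1_vx0 : (vy1 == vx0) = false. Proof. by rewrite -val_eqE /= !inordK. Qed.
Lemma ne_vy1_vx1 : (vy1 == vx1) = false. Proof. by rewrite -val_eqE /= !inordK. Qed.
Lemma ne_vy1_vy0 : (vy1 == vy0) = false. Proof. by rewrite -val_eqE /= !inordK. Qed.
Ltac vsimp := rewrite ?eqxx ?ne_vx0_vx1 ?ne_vx0_vy0 ?ne_vx0_vy1 ?ne_vx1_vx0 ?ne_vx1_vy0 ?ne_vx1_vy1 ?ne_vy0_vx0 ?ne_vy0_vx1 ?ne_vy0_vy1 ?ne_vy1_vx0 ?ne_vy1_vx1 ?ne_vy1_vy0 /=.

Lemma Pp_neq0 {K : fieldType} (r : seq K) x : x \notin r -> (Pp r).[x] != 0.
Proof.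
elim: r => [|y r IH]; first by rewrite /Pp big_nil hornerC oner_neq0.
rewrite inE negb_or => /andP[xy xr].
by rewrite /Pp big_cons hornerM hornerXsubC mulf_neq0 ?subr_eq0 // IH.
Qed.

Lemma PTp_neq0 {K : fieldType} (r : seq K) : uniq (0 :: r) -> PTp (0 :: r) != 0.
Proof.
move=> /= /andP[nr _]; apply/eqP => H.
have := @Pp_neq0 _ _ _ nr; have := congr1 (horner^~ 0) H.
by rewrite /= hornerD hornerM hornerXsubC subrr mul0r addr0 horner0 => ->; rewrite eqxx.
Qed.

Lemma ev_Fp {K : fieldType} m n k (a b c e : K * K) r1 r2 v :
  (Fp m n k a b c e r1 r2).@[v] =
  (lf e.2 e.1 vx0 vx1).@[v] ^+ m * (lf c.2 c.1 vy0 vy1).@[v] ^+ n -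
  k * (hv r1 (lf e.2 e.1 vx0 vx1).@[v] (lf a.2 a.1 vx0 vx1).@[v] *
       hv r2 (lf c.2 c.1 vy0 vy1).@[v] (lf b.2 b.1 vy0 vy1).@[v]).
Proof. by rewrite /Fp mevalB mevalM mevalZ mevalM !ev_exp !ev_Hp. Qed.

Lemma der_Fp {K : fieldType} m n k (a b c e : K * K) r1 r2 v j :
  ((Fp m.+1 n.+1 k a b c e r1 r2)^`M(j)).@[v] =
  m.+1%:R * (lf e.2 e.1 vx0 vx1).@[v] ^+ m * ((lf e.2 e.1 vx0 vx1)^`M(j)).@[v] * (lf c.2 c.1 vy0 vy1).@[v] ^+ n.+1 +
  (lf e.2 e.1 vx0 vx1).@[v] ^+ m.+1 * (n.+1%:R * (lf c.2 c.1 vy0 vy1).@[v] ^+ n * ((lf c.2 c.1 vy0 vy1)^`M(j)).@[v]) -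
  k * ((((lf e.2 e.1 vx0 vx1)^`M(j)).@[v] * hS r1 (lf e.2 e.1 vx0 vx1).@[v] (lf a.2 a.1 vx0 vx1).@[v] + ((lf a.2 a.1 vx0 vx1)^`M(j)).@[v] * hT r1 (lf e.2 e.1 vx0 vx1).@[v] (lf a.2 a.1 vx0 vx1).@[v])
         * hv r2 (lf c.2 c.1 vy0 vy1).@[v] (lf b.2 b.1 vy0 vy1).@[v] +
       hv r1 (lf e.2 e.1 vx0 vx1).@[v] (lf a.2 a.1 vx0 vx1).@[v] *
         (((lf c.2 c.1 vy0 vy1)^`M(j)).@[v] * hS r2 (lf c.2 c.1 vy0 vy1).@[v] (lf b.2 b.1 vy0 vy1).@[v] + ((lf b.2 b.1 vy0 vy1)^`M(j)).@[v] * hT r2 (lf c.2 c.1 vy0 vy1).@[v] (lf b.2 b.1 vy0 vy1).@[v])).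
Proof.
rewrite /Fp mderivB !mderivM mderivZ mderivM mevalB mevalD !mevalM mevalZ mevalD !mevalM.
by rewrite !der_exp !ev_exp !der_Hp !ev_Hp.
Qed.

Theorem theorem4p3 (K : closedFieldType) (d1 d2 : nat)
    (a b c e : K * K) :
  (0 < d1)%N -> (d1 <= d2)%N ->
  a != (0, 0) -> b != (0, 0) -> c != (0, 0) -> e != (0, 0) ->
  c.1 * b.2 - c.2 * b.1 != 0 ->
  e.1 * a.2 - e.2 * a.1 != 0 ->
  exists F : {mpoly K[4]},
    [/\ F != 0, bihomog d1 d2 F, smooth_bihom F,
        exists2 lam : K, lam != 0 &
          restr_x a F = lam *: (c.2 *: 'X_vy0 - c.1 *: 'X_vy1) ^+ d2
      & exists2 mu : K, mu != 0 &
          restr_y b F = mu *: (e.2 *: 'X_vx0 - e.1 *: 'X_vx1) ^+ d1].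
Proof.
move=> d1p d1d2 a0 b0 c0 e0 hcb hea.
case: d1 d1p d1d2 => // m _ d1d2.
case: d2 d1d2 => // n _.
have [r1 [ur1 sr1]] := @exists_uniq K m.
have [r2 [ur2 sr2]] := @exists_uniq K n.
have [k [k0 kb]] := choose_kappa (Pp (0 :: r1)) (Pp (0 :: r2)) (PTp (0 :: r1)) (PTp (0 :: r2)) (@PTp_neq0 _ _ ur1) (@PTp_neq0 _ _ ur2).
have s0 : e.2 * a.1 - e.1 * a.2 != 0.
  apply: contraNneq hea => H; apply/eqP.
  by transitivity (- (e.2 * a.1 - e.1 * a.2)); [ring | rewrite H oppr0].
have y0 : c.2 * b.1 - c.1 * b.2 != 0.
  apply: contraNneq hcb => H; apply/eqP.
  by transitivity (- (c.2 * b.1 - c.1 * b.2)); [ring | rewrite H oppr0].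
exists (Fp m.+1 n.+1 k a b c e (0 :: r1) (0 :: r2)); split.
- apply/eqP => F0; have := congr1 (meval (pt4 a b)) F0.
  rewrite ev_Fp meval0 !ev_lf /pt4; have [-> -> -> ->] := nth4 0 a.1 a.2 b.1 b.2.
  rewrite /= [a.2 * a.1]mulrC subrr mul0r subrr !mul0r mulr0 subr0 => /eqP.
  by rewrite mulf_eq0 !expf_eq0 (negbTE s0) (negbTE y0) !andbF.
- rewrite /Fp; apply: bhB.
    have := @bhM _ _ _ _ _ _ _ (@bhX _ _ _ m.+1 _ (bh_lfx e.2 e.1))
                              (@bhX _ _ _ n.+1 _ (bh_lfy c.2 c.1)).
    by rewrite !mul1n !mul0n addn0 add0n.
  apply: bhZ.
  have := @bhM _ _ _ _ _ _ _ (@bh_Hp _ _ _ (0 :: r1) _ _ (bh_lfx e.2 e.1) (bh_lfx a.2 a.1))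
                             (@bh_Hp _ _ _ (0 :: r2) _ _ (bh_lfy c.2 c.1) (bh_lfy b.2 b.1)).
  by rewrite /= sr1 sr2 !mul1n !mul0n addn0 add0n.
- move=> u v u0 v0 [F0 dF].
  set P := pt4 u v.
  have st0 : ((lf e.2 e.1 vx0 vx1).@[P], (lf a.2 a.1 vx0 vx1).@[P]) != (0, 0).
    rewrite !ev_lf /P /pt4; have [-> -> _ _] := nth4 0 u.1 u.2 v.1 v.2.
    apply: contra u0 => /eqP [h1 h2].
    have E1 : u.1 = 0.
      have : u.1 * (e.1 * a.2 - e.2 * a.1) = 0.
        transitivity (e.1 * (a.2 * u.1 - a.1 * u.2) - a.1 * (e.2 * u.1 - e.1 * u.2)); first ring.
        by rewrite h1 h2 !mulr0 subrr.
      by move/eqP; rewrite mulf_eq0 (negbTE hea) orbF => /eqP.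
    have E2 : u.2 = 0.
      have : u.2 * (e.1 * a.2 - e.2 * a.1) = 0.
        transitivity (e.2 * (a.2 * u.1 - a.1 * u.2) - a.2 * (e.2 * u.1 - e.1 * u.2)); first ring.
        by rewrite h1 h2 !mulr0 subrr.
      by move/eqP; rewrite mulf_eq0 (negbTE hea) orbF => /eqP.
    by rewrite [u]surjective_pairing E1 E2.
  have yz0 : ((lf c.2 c.1 vy0 vy1).@[P], (lf b.2 b.1 vy0 vy1).@[P]) != (0, 0).
    rewrite !ev_lf /P /pt4; have [_ _ -> ->] := nth4 0 u.1 u.2 v.1 v.2.
    apply: contra v0 => /eqP [h1 h2].
    have E1 : v.1 = 0.
      have : v.1 * (c.1 * b.2 - c.2 * b.1) = 0.
        transitivity (c.1 * (b.2 * v.1 - b.1 * v.2) - b.1 * (c.2 * v.1 - c.1 * v.2)); first ring.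
        by rewrite h1 h2 !mulr0 subrr.
      by move/eqP; rewrite mulf_eq0 (negbTE hcb) orbF => /eqP.
    have E2 : v.2 = 0.
      have : v.2 * (c.1 * b.2 - c.2 * b.1) = 0.
        transitivity (c.2 * (b.2 * v.1 - b.1 * v.2) - b.2 * (c.2 * v.1 - c.1 * v.2)); first ring.
        by rewrite h1 h2 !mulr0 subrr.
      by move/eqP; rewrite mulf_eq0 (negbTE hcb) orbF => /eqP.
    by rewrite [v]surjective_pairing E1 E2.
  have KT := erefl (k * (hT (0 :: r1) (lf e.2 e.1 vx0 vx1).@[P] (lf a.2 a.1 vx0 vx1).@[P] *
      hv (0 :: r2) (lf c.2 c.1 vy0 vy1).@[P] (lf b.2 b.1 vy0 vy1).@[P]) * (e.1 * a.2 - e.2 * a.1)).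
  rewrite {2}(_ : k * _ * _ = - (e.1 * ((Fp m.+1 n.+1 k a b c e (0 :: r1) (0 :: r2))^`M(vx0)).@[P]
      + e.2 * ((Fp m.+1 n.+1 k a b c e (0 :: r1) (0 :: r2))^`M(vx1)).@[P])) in KT; last first.
    by rewrite !der_Fp !der_lf; vsimp; ring.
  rewrite !dF !mulr0 addr0 oppr0 in KT.
  have KW := erefl (k * (hv (0 :: r1) (lf e.2 e.1 vx0 vx1).@[P] (lf a.2 a.1 vx0 vx1).@[P] *
      hT (0 :: r2) (lf c.2 c.1 vy0 vy1).@[P] (lf b.2 b.1 vy0 vy1).@[P]) * (c.1 * b.2 - c.2 * b.1)).
  rewrite {2}(_ : k * _ * _ = - (c.1 * ((Fp m.+1 n.+1 k a b c e (0 :: r1) (0 :: r2))^`M(vy0)).@[P]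
      + c.2 * ((Fp m.+1 n.+1 k a b c e (0 :: r1) (0 :: r2))^`M(vy1)).@[P])) in KW; last first.
    by rewrite !der_Fp !der_lf; vsimp; ring.
  rewrite !dF !mulr0 addr0 oppr0 in KW.
  apply: (@core K m n k (0 :: r1) (0 :: r2) _ _ _ _ ur1 ur2 _ _ k0 kb st0 yz0).
  + by rewrite /= sr1.
  + by rewrite /= sr2.
  + by apply/eqP; rewrite -subr_eq0 -ev_Fp F0.
  + by move/eqP: KT; rewrite mulf_eq0 (negbTE hea) orbF mulf_eq0 (negbTE k0) /= => /eqP.
  + by move/eqP: KW; rewrite mulf_eq0 (negbTE hcb) orbF mulf_eq0 (negbTE k0) /= => /eqP.
- by exists ((e.2 * a.1 - e.1 * a.2) ^+ m.+1); [rewrite expf_neq0 | exact: restr_x_Fp].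
- by exists ((c.2 * b.1 - c.1 * b.2) ^+ n.+1); [rewrite expf_neq0 | exact: restr_y_Fp].
Qed.
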